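(* For every integer $r\ge4$, \[ f_r(r+1,r)=\rho_r\big(T(r+2,r)\big)=\frac{4}{r+2}. \]
   Context: $\mathcal{G}(\Delta,\omega)$ denotes the class of finite simple graphs $G$ with maximum degree $\Delta(G)\le\Delta$ and clique number $\omega(G)\le\omega$. $k_t(G)$ is the number of copies of $K_t$ in $G$ and $\rho_t(G)=k_t(G)/|V(G)|$. $f_t(\Delta,\omega)=\sup\{\rho_t(G): G\in\mathcal{G}(\Delta,\omega),\ |V(G)|\ge 1\}$. $T(n,r)$ denotes the $r$-partite Turán graph on $n$ vertices; for $r\ge 4$, $T(r+2,r)$ has $r-2$ parts of size $1$ and two parts of size $2$. *)

(* Defs.v *)
From HB Require Import structures.
From mathcomp Require Import all_boot all_order all_algebra.
Set Implicit Arguments. Unset Strict Implicit. Unset Printing Implicit Defensive.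
Import Order.TTheory GRing.Theory Num.Theory.

Definition simple_graph (V : finType) (e : rel V) : Prop :=
  symmetric e /\ irreflexive e.

Definition is_clique (V : finType) (e : rel V) (S : {set V}) : bool :=
  [forall x in S, forall y in S, (x != y) ==> e x y].

Definition degree (V : finType) (e : rel V) (v : V) : nat := #|[set u | e v u]|.

Definition max_degree_le (V : finType) (e : rel V) (D : nat) : Prop :=
  forall v : V, degree e v <= D.

Definition clique_number_le (V : finType) (e : rel V) (w : nat) : Prop :=
  forall S : {set V}, is_clique e S -> #|S| <= w.

Definition kcount (V : finType) (e : rel V) (t : nat) : nat :=
  #|[set S : {set V} | (#|S| == t) && is_clique e S]|.

Definition rho (V : finType) (e : rel V) (t : nat) : rat :=
  ((kcount e t)%:R / #|V|%:R)%R.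

Definition in_class (V : finType) (e : rel V) (D w : nat) : Prop :=
  simple_graph e /\ max_degree_le e D /\ clique_number_le e w.

Definition is_f (t D w : nat) (x : rat) : Prop :=
  (forall (V : finType) (e : rel V),
      in_class e D w -> 0 < #|V| -> (rho e t <= x)%R) /\
  (forall y : rat,
      (forall (V : finType) (e : rel V),
          in_class e D w -> 0 < #|V| -> (rho e t <= y)%R) -> (x <= y)%R).

(* Turán graph T(n, r) on 'I_n: vertex i lies in part (i mod r); parts have
   sizes differing by at most one; two vertices adjacent iff in different parts. *)
Definition turan_rel (n r : nat) : rel 'I_n :=
  fun i j => (i %% r != j %% r)%N.
Arguments turan_rel n r : clear implicits.

(* Main.v *)
Require Import Defs.
From HB Require Import structures.
From mathcomp Require Import all_boot all_order all_algebra.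
From mathcomp Require Import zify ring lra.
Import Order.TTheory GRing.Theory Num.Theory.
Set Implicit Arguments. Unset Strict Implicit. Unset Printing Implicit Defensive.

Definition goodG (V : finType) (e : rel V) (r : nat) : Prop :=
  symmetric e /\ irreflexive e /\ (forall v, #|[set u | e v u]| <= r.+1) /\
  (forall S : {set V}, is_clique e S -> #|S| <= r).

Definition Kr (V : finType) (e : rel V) (r : nat) :=
  [set S : {set V} | (#|S| == r) && is_clique e S].

Definition kv (V : finType) (e : rel V) (r : nat) (v : V) :=
  #|[set S in Kr e r | v \in S]|.

Definition Nb (V : finType) (e : rel V) (v : V) := [set u | e v u].

Lemma cliqueP (V : finType) (e : rel V) (S : {set V}) :
  reflect (forall x y, x \in S -> y \in S -> x != y -> e x y) (is_clique e S).
Proof.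
apply: (iffP forall_inP) => H.
- move=> x y xS yS nxy; exact: (implyP (forall_inP (H x xS) y yS)).
- move=> x xS; apply/forall_inP => y yS; apply/implyP; exact: H.
Qed.

Lemma KrP (V : finType) (e : rel V) r S :
  S \in Kr e r -> #|S| = r /\ (forall x y, x \in S -> y \in S -> x != y -> e x y).
Proof. by rewrite inE => /andP[/eqP -> /cliqueP]. Qed.

(* no (r+1)-clique: X in Kr, y outside adjacent to all of X *)
Lemma X2 (V : finType) (e : rel V) r (hG : goodG e r) (X : {set V}) y :
  X \in Kr e r -> y \notin X -> (forall x, x \in X -> e y x) -> False.
Proof.
case: hG => hsym [hirr [hdeg hcl]] /KrP [hX hXc] hy hadj.
have : is_clique e (y |: X).
  apply/cliqueP => a b; rewrite !inE => /predU1P[->|ha] /predU1P[->|hb] nab.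
  - by rewrite eqxx in nab.
  - exact: hadj.
  - by rewrite hsym; apply: hadj.
  - exact: hXc.
move/hcl; rewrite cardsU1 hy hX; lia.
Qed.

Lemma card_sym (V : finType) (X Y : {set V}) : #|X| = #|Y| -> #|X :\: Y| = #|Y :\: X|.
Proof.
move=> h; have h1 := cardsID Y X; have h2 := cardsID X Y.
rewrite setIC in h2; lia.
Qed.

Lemma FO (V : finType) (e : rel V) r (hG : goodG e r) K w :
  K \in Kr e r -> w \in K -> #|Nb e w :\: K| <= 2.
Proof.
case: hG => hsym [hirr [hdeg hcl]] /KrP [hK hKc] hw.
have h1 := cardsID K (Nb e w).
have h2 : K :\ w \subset Nb e w :&: K.
  apply/subsetP => x; rewrite !inE => /andP[nxw xK]; rewrite xK andbT.
  by apply: hKc; rewrite // eq_sym.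
have := subset_leq_card h2; rewrite (cardsD1 w K) hw in hK.
have := hdeg w; rewrite -/(Nb e w); move: h1; rewrite /Nb; lia.
Qed.

Lemma Fsub (V : finType) (e : rel V) r (D K : {set V}) (w : V) :
  D \in Kr e r -> w \in K -> w \in D -> D :\: K \subset Nb e w :\: K.
Proof.
move=> /KrP [_ hD] wK wD; apply/subsetP => x; rewrite !inE => /andP[xK xD].
rewrite xK /=; apply: hD => //; apply: contraNneq xK => <-; done.
Qed.

Lemma union_eq (V : finType) (e : rel V) r (hG : goodG e r) (C D K : {set V}) :
  C \in Kr e r -> D \in Kr e r -> K \in Kr e r -> C :\: K = D :\: K -> C = D.
Proof.
move=> hC hD hK hCD.
have hG' := hG; case: hG' => hsym [hirr [hdeg hcl]].
case/KrP: hC => cC hCc; case/KrP: hD => cD hDc; case/KrP: hK => cK hKc.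
have hU : is_clique e (C :|: D).
  apply/cliqueP => x y; rewrite !inE => hx hy nxy.
  have mC : forall z, z \in C -> z \notin D -> z \in K.
    move=> z zC zD; apply: contraR zD => zK.
    have : z \in C :\: K by rewrite inE zK zC.
    by rewrite hCD inE => /andP[].
  have mD : forall z, z \in D -> z \notin C -> z \in K.
    move=> z zD zC; apply: contraR zC => zK.
    have : z \in D :\: K by rewrite inE zK zD.
    by rewrite -hCD inE => /andP[].
  case: (boolP (x \in C)) => xC; case: (boolP (y \in C)) => yC; first exact: hCc.
  - have yD : y \in D by move: hy; rewrite (negbTE yC).
    case: (boolP (x \in D)) => xD; first exact: hDc.
    by apply: hKc => //; [exact: mC | exact: mD].
  - have xD : x \in D by move: hx; rewrite (negbTE xC).
    case: (boolP (y \in D)) => yD; first exact: hDc.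
    by apply: hKc => //; [exact: mD | exact: mC].
  - have yD : y \in D by move: hy; rewrite (negbTE yC).
    have xD : x \in D by move: hx; rewrite (negbTE xC).
    exact: hDc.
have hu := hcl _ hU.
have e1 : C = C :|: D.
  apply/eqP; rewrite eqEcard subsetUl cC //.
have e2 : D = C :|: D.
  apply/eqP; rewrite eqEcard subsetUr cD //.
by rewrite e1 -e2.
Qed.

Lemma kvsetE (V : finType) (e : rel V) r v (S : {set V}) :
  (S \in [set S in Kr e r | v \in S]) = (S \in Kr e r) && (v \in S).
Proof. by rewrite [in LHS]inE. Qed.

Lemma kv_ge1 (V : finType) (e : rel V) r K v :
  K \in Kr e r -> v \in K -> 0 < kv e r v.
Proof. move=> hK hv; apply/card_gt0P; exists K; by rewrite kvsetE hK hv. Qed.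

Lemma kv_le4 (V : finType) (e : rel V) r (hG : goodG e r) K v :
  K \in Kr e r -> v \in K -> kv e r v <= 4.
Proof.
move=> hK hv.
set A := [set S in Kr e r | v \in S].
have inj : {in A &, injective (fun S : {set V} => S :\: K)}.
  move=> C D; rewrite !kvsetE => /andP[hC _] /andP[hD _] h; exact: (union_eq hG hC hD hK h).
have sub : (fun S : {set V} => S :\: K) @: A \subset powerset (Nb e v :\: K).
  apply/subsetP => X /imsetP [S]; rewrite kvsetE => /andP[hS vS] ->.
  by rewrite inE; apply: Fsub hS hv vS.
have := subset_leq_card sub; rewrite card_in_imset // card_powerset.
have := FO hG hK hv; rewrite /kv -/A.
move: (#|Nb e v :\: K|) => n.
case: n => [|[|[|n]]] //= _; lia.
Qed.

Lemma core (V : finType) (e : rel V) r (hG : goodG e r) (hr : 4 <= r)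
  (K C Di Dj : {set V}) (u w0 : V) :
  K \in Kr e r -> C \in Kr e r -> Di \in Kr e r -> Dj \in Kr e r ->
  u \in K -> u \notin C -> w0 \in K -> w0 \in C -> u \in Di -> u \in Dj ->
  Nb e u :\: K = (Di :\: K) :|: (Dj :\: K) -> #|Nb e u :\: K| = 2 ->
  #|Di :\: K| = 1 -> False.
Proof.
have hG' := hG; case: hG' => hsym [hirr [hdeg hcl]].
move=> hK hC hDi hDj uK uC w0K w0C uDi uDj hOu hOu2 hTi1.
have [cK hKc] := KrP hK; have [cC hCc] := KrP hC.
have [cDi hDic] := KrP hDi; have [cDj hDjc] := KrP hDj.
set Ou := Nb e u :\: K.
have NoCover : forall w, w \in K -> w \in C -> Ou \subset Nb e w :\: K -> False.
  move=> w wK wC hsub.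
  have hT : C :\: K \subset Nb e w :\: K := Fsub hC wK wC.
  have heq : Ou = Nb e w :\: K.
    apply/eqP; rewrite eqEcard hsub hOu2; exact: (FO hG hK wK).
  apply: (X2 hG hC uC) => x xC.
  case: (boolP (x \in K)) => xK.
  - apply: hKc => //; apply: contraNneq uC => ->; done.
  - have : x \in Ou by rewrite heq; apply: (subsetP hT); rewrite inE xK xC.
    by rewrite inE => /andP[_]; rewrite inE.
have HQ : forall w, w \in K -> w \in C -> (w \notin Di) || (w \notin Dj).
  move=> w wK wC; rewrite -negb_and; apply/negP => /andP[wDi wDj].
  apply: (NoCover w wK wC).
  rewrite /Ou hOu subUset; by rewrite (Fsub hDi wK wDi) (Fsub hDj wK wDj).
have hTjsub : Dj :\: K \subset Ou by rewrite /Ou hOu subsetUr.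
have hTisub : Di :\: K \subset Ou by rewrite /Ou hOu subsetUl.
have HTj2 : #|Dj :\: K| = 2 -> forall w, w \in K -> w \in C -> w \notin Dj.
  move=> h2 w wK wC; apply/negP => wDj; apply: (NoCover w wK wC).
  have -> : Ou = Dj :\: K by apply/esym/eqP; rewrite eqEcard hTjsub hOu2 h2.
  exact: (Fsub hDj wK wDj).
have /cards1P [t hTi] : #|Di :\: K| == 1 by rewrite hTi1.
have hSi1 : #|K :\: Di| == 1 by rewrite card_sym ?hTi1 // cK cDi.
have /cards1P [s hSi] := hSi1.
have : t \in Di :\: K by rewrite hTi set11.
rewrite inE => /andP[tK tDi].
have : s \in K :\: Di by rewrite hSi set11.
rewrite inE => /andP[sDi sK].
have ht : forall k, k \in K -> k != s -> e t k.
  move=> k kK ks.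
  have kDi : k \in Di.
    case: (boolP (k \in Di)) => // kDi.
    have : k \in K :\: Di by rewrite inE kDi kK.
    by rewrite hSi inE (negbTE ks).
  apply: hDic => //; apply: contraNneq tK => ->; done.
have hnts : e t s -> False.
  move=> h; apply: (X2 hG hK tK) => k kK; case: (eqVneq k s) => [->|ks] //; exact: ht.
have hts : t != s by apply: contraNneq tK => ->.
have hTle2 : #|C :\: K| <= 2 :=
  leq_trans (subset_leq_card (Fsub hC w0K w0C)) (FO hG hK w0K).
have hSC : #|K :\: C| = #|C :\: K| by apply: card_sym; rewrite cK cC.
have hQ : #|K :&: C| + #|K :\: C| = r by rewrite cardsID.
have hTj2 : #|Dj :\: K| <= 2 by rewrite -hOu2; exact: subset_leq_card.
have hSj : #|K :\: Dj| = #|Dj :\: K| by apply: card_sym; rewrite cK cDj.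
have hSi1' : #|K :\: Di| = 1 by apply/eqP.
have hsC : s \in C.
  apply: contraT => sC.
  have hQS : K :&: C \subset K :\: Dj.
    apply/subsetP => w; rewrite inE => /andP[wK wC].
    case/orP: (HQ w wK wC) => h.
    - have : w \in K :\: Di by rewrite inE h wK.
      by rewrite hSi inE => /eqP ew; move: wC; rewrite ew (negbTE sC).
    - by rewrite inE h wK.
  have c1 := subset_leq_card hQS.
  have hE : K :&: C = K :\: Dj by apply/eqP; rewrite eqEcard hQS; clear -c1 hSj hTj2 hQ hSC hTle2 hr; lia.
  have hOuE : Ou = Dj :\: K by apply/esym/eqP; rewrite eqEcard hTjsub hOu2; clear -c1 hE hSj hQ hSC hTle2 hr; lia.
  have : t \in Ou by apply: (subsetP hTisub); rewrite hTi set11.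
  rewrite hOuE inE => /andP[_ tDj].
  have sDj : s \in Dj.
    case: (boolP (s \in Dj)) => // sDj.
    have : s \in K :\: Dj by rewrite inE sDj sK.
    by rewrite -hE inE (negbTE sC) andbF.
  by exfalso; apply: hnts; apply: hDjc.
have hQ2 : #|K :&: C| <= 2.
  case: (eqVneq #|Dj :\: K| 2) => h2.
  - have hQS : K :&: C \subset K :\: Dj.
      apply/subsetP => w; rewrite inE => /andP[wK wC].
      by rewrite inE wK (HTj2 h2 w wK wC).
    have := subset_leq_card hQS; clear -hSj h2; lia.
  - have hQS : K :&: C \subset (K :\: Di) :|: (K :\: Dj).
      apply/subsetP => w; rewrite inE => /andP[wK wC].
      by case/orP: (HQ w wK wC) => h; rewrite !inE h wK ?orbT.
    have := subset_leq_card hQS; rewrite cardsU; clear -h2 hTj2 hSj hSi1'; lia.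
have hQs : 0 < #|(K :&: C) :\ s|.
  have := cardsD1 s (K :&: C); clear -hQ hSC hTle2 hr; lia.
case/card_gt0P: hQs => b; rewrite !inE => /andP[bs /andP[bK bC]].
have bDi : b \in Di.
  case: (boolP (b \in Di)) => // bDi.
  have : b \in K :\: Di by rewrite inE bDi bK.
  by rewrite hSi inE (negbTE bs).
have tO : t \in Nb e b :\: K.
  by apply: (subsetP (Fsub hDi bK bDi)); rewrite hTi set11.
have hT : C :\: K = Nb e b :\: K.
  apply/eqP; rewrite eqEcard (Fsub hC bK bC) /=.
  have := FO hG hK bK; clear -hQ2 hQ hSC hr; lia.
move: tO; rewrite -hT inE => /andP[_ tC].
by apply: hnts; apply: hCc.
Qed.

Lemma two_cl (V : finType) (e : rel V) r (hG : goodG e r) (hr : 4 <= r)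
  (K C D1 D2 : {set V}) (u w0 : V) :
  K \in Kr e r -> C \in Kr e r -> D1 \in Kr e r -> D2 \in Kr e r ->
  u \in K -> u \notin C -> w0 \in K -> w0 \in C -> u \in D1 -> u \in D2 ->
  D1 != K -> D2 != K -> D1 = D2.
Proof.
move=> hK hC hD1 hD2 uK uC w0K w0C uD1 uD2 n1 n2.
apply/eqP; apply: contraT => n12.
have [cK _] := KrP hK; have [cD1 _] := KrP hD1; have [cD2 _] := KrP hD2.
have hT12 : D1 :\: K != D2 :\: K.
  apply: contraNneq n12 => h; apply/eqP; exact: (union_eq hG hD1 hD2 hK h).
have ne0 : forall D, D \in Kr e r -> D != K -> 0 < #|D :\: K|.
  move=> D hD nDK; have [cD _] := KrP hD.
  rewrite card_gt0; apply: contraNneq nDK => h.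
  have sub : D \subset K by rewrite -setD_eq0 h.
  by rewrite eqEcard sub /= cD cK.
have p1 := ne0 _ hD1 n1; have p2 := ne0 _ hD2 n2.
have s1 : D1 :\: K \subset Nb e u :\: K := Fsub hD1 uK uD1.
have s2 : D2 :\: K \subset Nb e u :\: K := Fsub hD2 uK uD2.
have hO := FO hG hK uK.
have hU2 : 2 <= #|(D1 :\: K) :|: (D2 :\: K)|.
  rewrite leqNgt; apply/negP => h1.
  have e1 : D1 :\: K = (D1 :\: K) :|: (D2 :\: K).
    apply/eqP; rewrite eqEcard subsetUl /=; clear -p1 h1; lia.
  have e2 : D2 :\: K = (D1 :\: K) :|: (D2 :\: K).
    apply/eqP; rewrite eqEcard subsetUr /=; clear -p2 h1; lia.
  by rewrite e1 -e2 eqxx in hT12.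
have hOu : Nb e u :\: K = (D1 :\: K) :|: (D2 :\: K).
  apply/esym/eqP; rewrite eqEcard subUset s1 s2 /=; clear -hO hU2; lia.
have hOu2 : #|Nb e u :\: K| = 2.
  have hO' := hO; rewrite hOu in hO'; rewrite hOu; clear -hO' hU2; lia.
case: (eqVneq #|D1 :\: K| 1) => h1.
  by case: (core hG hr hK hC hD1 hD2 uK uC w0K w0C uD1 uD2 hOu hOu2 h1).
case: (eqVneq #|D2 :\: K| 1) => h2.
  rewrite setUC in hOu.
  by case: (core hG hr hK hC hD2 hD1 uK uC w0K w0C uD2 uD1 hOu hOu2 h2).
have c1 := subset_leq_card s1; have c2 := subset_leq_card s2.
have e1 : D1 :\: K = Nb e u :\: K.
  apply/eqP; rewrite eqEcard s1 /=; clear -c1 hOu2 p1 h1; lia.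
have e2 : D2 :\: K = Nb e u :\: K.
  apply/eqP; rewrite eqEcard s2 /=; clear -c2 hOu2 p2 h2; lia.
by rewrite e1 e2 eqxx in hT12.
Qed.

Lemma kv_le2 (V : finType) (e : rel V) r (hG : goodG e r) (hr : 4 <= r)
  (K C : {set V}) (u w0 : V) :
  K \in Kr e r -> C \in Kr e r -> u \in K -> u \notin C -> w0 \in K -> w0 \in C ->
  kv e r u <= 2.
Proof.
move=> hK hC uK uC w0K w0C.
rewrite /kv; set A := [set S in Kr e r | u \in S].
case: (pickP [pred D : {set V} | (D \in A) && (D != K)]) => [D1 /andP[hD1A n1] | hnone].
- have sub : A \subset [set K; D1].
    apply/subsetP => S hS; rewrite !inE.
    case: (eqVneq S K) => //= nSK.
    move: hS hD1A; rewrite !kvsetE => /andP[hS uS] /andP[hD1 uD1].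
    apply/eqP; exact: (two_cl hG hr hK hC hS hD1 uK uC w0K w0C uS uD1 nSK n1).
  apply: leq_trans (subset_leq_card sub) _; rewrite cards2; by case: (_ != _).
- have sub : A \subset [set K].
    apply/subsetP => S hS; rewrite !inE.
    have := hnone S; rewrite /= hS /=; by move/negbFE.
  by apply: leq_trans (subset_leq_card sub) _; rewrite cards1.
Qed.

Lemma other_cl (V : finType) (e : rel V) r (K : {set V}) v :
  K \in Kr e r -> v \in K -> 2 <= kv e r v ->
  exists D, [/\ D \in Kr e r, v \in D & D != K].
Proof.
move=> hK vK h2.
have := cardsD1 K [set S in Kr e r | v \in S].
rewrite kvsetE hK vK /= => hc.
have : 0 < #|[set S in Kr e r | v \in S] :\ K| by move: h2; rewrite /kv hc.
case/card_gt0P => D; rewrite in_setD1 kvsetE => /andP[nDK /andP[hD vD]].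
by exists D.
Qed.

Lemma miss_v (V : finType) (e : rel V) r (K D : {set V}) :
  K \in Kr e r -> D \in Kr e r -> D != K -> exists2 u, u \in K & u \notin D.
Proof.
move=> hK hD nDK; have [cK _] := KrP hK; have [cD _] := KrP hD.
have : ~~ (K \subset D).
  apply: contraNN nDK => sub; rewrite eq_sym eqEcard sub /= cD cK //.
by case/subsetPn => u uK uD; exists u.
Qed.

Lemma LL (V : finType) (e : rel V) r (hG : goodG e r) (hr : 4 <= r) (K : {set V}) :
  K \in Kr e r ->
  (exists2 v, v \in K & kv e r v = 1) \/
  (exists v1 v2, [/\ v1 \in K, v2 \in K, v1 != v2, kv e r v1 <= 2 & kv e r v2 <= 2]).
Proof.
move=> hK.
case: (boolP [exists v in K, kv e r v == 1]) => [/exists_inP [v vK /eqP h]|hno].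
  by left; exists v.
right.
have hk2 : forall v, v \in K -> 2 <= kv e r v.
  move=> v vK; have h1 := kv_ge1 hK vK.
  have : kv e r v != 1.
    by apply: contraNneq hno => h; apply/exists_inP; exists v => //; rewrite h.
  move: h1; clear; lia.
have [cK _] := KrP hK.
have : 0 < #|K| by rewrite cK; clear -hr; lia.
case/card_gt0P => v0 v0K.
have [D0 [hD0 v0D0 nD0]] := other_cl hK v0K (hk2 v0 v0K).
have [u uK uD0] := miss_v hK hD0 nD0.
have ku := kv_le2 hG hr hK hD0 uK uD0 v0K v0D0.
have [D1 [hD1 uD1 nD1]] := other_cl hK uK (hk2 u uK).
have [u' u'K u'D1] := miss_v hK hD1 nD1.
have ku' := kv_le2 hG hr hK hD1 u'K u'D1 uK uD1.
exists u, u'; split => //.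
by apply: contraNneq u'D1 => <-.
Qed.

Local Open Scope ring_scope.

Lemma g0 (n : nat) : (0 < n)%N -> (n <= 4)%N -> 0 <= (n%:R : rat)^-1 - 1/4.
Proof. by case: n => [|[|[|[|[|n]]]]] //= _ _; vm_compute. Qed.

Lemma g2 (n : nat) : (0 < n)%N -> (n <= 2)%N -> 1/4 <= (n%:R : rat)^-1 - 1/4.
Proof. by case: n => [|[|[|n]]] //= _ _; vm_compute. Qed.

Lemma g1 : 3/4 <= ((1%N)%:R : rat)^-1 - 1/4.
Proof. by vm_compute. Qed.

Lemma clique_sum (V : finType) (e : rel V) r (hG : goodG e r) (hr : (4 <= r)%N) (K : {set V}) :
  K \in Kr e r -> (r + 2)%N%:R / 4%:R <= \sum_(v in K) ((kv e r v)%:R : rat)^-1.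
Proof.
move=> hK; have [cK _] := KrP hK.
set g := fun v => ((kv e r v)%:R : rat)^-1 - 1/4.
have gpos : forall v, v \in K -> 0 <= g v.
  move=> v vK; apply: g0; first exact: kv_ge1 hK vK.
  exact: (kv_le4 hG hK vK).
have e1 : \sum_(v in K) ((kv e r v)%:R : rat)^-1 = \sum_(v in K) g v + #|K|%:R / 4%:R.
  rewrite /g sumrB sumr_const -mulr_natr cK.
  lra.
have hs : 1/2 <= \sum_(v in K) g v.
  case: (LL hG hr hK) => [[v vK hv] | [v1 [v2 [v1K v2K n12 k1 k2]]]].
  - rewrite (bigD1 v) //=.
    have h1 : 3/4 <= g v by rewrite /g hv; exact: g1.
    have h2 : 0 <= \sum_(i in K | i != v) g i.
      by apply: sumr_ge0 => i /andP[iK _]; exact: gpos.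
    lra.
  - rewrite (bigD1 v1) //= (bigD1 v2) /=; last by rewrite v2K eq_sym n12.
    have h1 : 1/4 <= g v1 by apply: g2 => //; exact: kv_ge1 hK v1K.
    have h2 : 1/4 <= g v2 by apply: g2 => //; exact: kv_ge1 hK v2K.
    have h3 : 0 <= \sum_(i | (i \in K) && (i != v1) && (i != v2)) g i.
      by apply: sumr_ge0 => i /andP[/andP[iK _] _]; exact: gpos.
    lra.
rewrite e1 cK natrD.
have -> : (4%:R : rat) = 4 by [].
lra.
Qed.

Lemma upper (V : finType) (e : rel V) r (hG : goodG e r) (hr : (4 <= r)%N) :
  (0 < #|V|)%N -> rho e r <= 4%:R / (r + 2)%N%:R.
Proof.
move=> hV.
set Ks := Kr e r.
have hk : kcount e r = #|Ks| by [].
set f := fun v => ((kv e r v)%:R : rat)^-1.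
have H1 : \sum_(K in Ks) ((r + 2)%N%:R / 4%:R : rat) <= \sum_(K in Ks) \sum_(v in K) f v.
  by apply: ler_sum => K hK; exact: clique_sum.
rewrite sumr_const in H1.
have H2 : \sum_(K in Ks) \sum_(v in K) f v =
          \sum_(v in [set: V]) \sum_(K in Ks | v \in K) f v.
  by rewrite (exchange_big_dep (mem [set: V])) //= => K v _ _; rewrite in_setT.
have H3 : forall v, \sum_(K in Ks | v \in K) f v = f v * (kv e r v)%:R.
  move=> v; rewrite (eq_bigl (fun K => K \in [set S in Ks | v \in S])).
    by rewrite sumr_const mulr_natr.
  by move=> K; rewrite kvsetE.
have H4 : \sum_(v in [set: V]) f v * (kv e r v)%:R <= \sum_(v in [set: V]) (1 : rat).
  apply: ler_sum => v _; rewrite /f.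
  case: (eqVneq (kv e r v) 0%N) => [->|h]; first by rewrite invr0 mul0r.
  by rewrite mulVf // pnatr_eq0.
rewrite sumr_const cardsT in H4.
rewrite (eq_bigr _ (fun v _ => H3 v)) in H2.
have H : ((r + 2)%N%:R / 4%:R : rat) *+ #|Ks| <= #|V|%:R.
  by rewrite H2 in H1; exact: le_trans H1 H4.
have H' : (#|Ks|%:R : rat) * ((r + 2)%N%:R / 4%:R) <= #|V|%:R by rewrite mulr_natl.
clear H; move: H' => H.
rewrite /rho hk.
have hn : (0 : rat) < #|V|%:R by rewrite ltr0n.
have hm : (0 : rat) < (r + 2)%N%:R by rewrite ltr0n addn2.
rewrite ler_pdivrMr //.
move: H; set a := (#|Ks|%:R : rat); set b := (#|V|%:R : rat); set m := ((r + 2)%N%:R : rat) => H.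
have ha : a = (a * (m / 4%:R)) * (4%:R / m).
  by field; move: hm; rewrite natrD => h; exact: lt0r_neq0 h.
rewrite ha mulrC; apply: ler_wpM2l.
  by apply: divr_ge0; [|apply: ltW].
exact: H.
Qed.

Local Close Scope ring_scope.

Lemma modr (r a : nat) : 2 <= r -> a < r + 2 -> a %% r = if a < r then a else a - r.
Proof.
move=> hr ha; case: ltnP => h; first by rewrite modn_small.
have -> : a = (a - r) + r by rewrite subnK.
rewrite modnDr modn_small; last by move: ha hr h; clear; lia.
by rewrite addnK.
Qed.

Lemma tur_res_inj r (S : {set 'I_(r + 2)}) (i j : 'I_(r + 2)) :
  is_clique (turan_rel (r + 2) r) S -> i \in S -> j \in S -> i %% r = j %% r -> i = j.
Proof.
move=> /cliqueP hS iS jS h; apply/eqP; apply: contraT => nij.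
by have := hS i j iS jS nij; rewrite /turan_rel h eqxx.
Qed.

Definition phi r (hr : 0 < r) (i : 'I_(r + 2)) : 'I_r := Ordinal (ltn_pmod i hr).

Lemma tur_clique_le r (hr : 0 < r) (S : {set 'I_(r + 2)}) :
  is_clique (turan_rel (r + 2) r) S -> #|S| <= r.
Proof.
move=> hS.
have inj : {in S &, injective (phi hr)}.
  move=> i j iS jS /(congr1 val) /= h; exact: tur_res_inj hS iS jS h.
rewrite -(card_in_imset inj); apply: leq_trans (max_card _) _; by rewrite card_ord.
Qed.

Lemma tur_res_ex r (hr : 0 < r) (S : {set 'I_(r + 2)}) :
  #|S| = r -> is_clique (turan_rel (r + 2) r) S ->
  forall m : 'I_r, exists2 j, j \in S & j %% r = m.
Proof.
move=> cS hS m.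
have inj : {in S &, injective (phi hr)}.
  move=> i j iS jS /(congr1 val) /= h; exact: tur_res_inj hS iS jS h.
have hT : phi hr @: S = setT.
  by apply/eqP; rewrite eqEcard subsetT /= cardsT card_ord card_in_imset // cS.
have : m \in phi hr @: S by rewrite hT inE.
by case/imsetP => j jS ->; exists j.
Qed.

Definition o0 r : 'I_(r + 2) := Ordinal (leq_trans (isT : 0 < 2) (leq_addl r 2)).
Definition o1 r : 'I_(r + 2) := Ordinal (leq_trans (isT : 1 < 2) (leq_addl r 2)).

Definition Ftur r (S : {set 'I_(r + 2)}) := (o0 r \in S, o1 r \in S).

Lemma tur_sub r (hr : 4 <= r) (S S' : {set 'I_(r + 2)}) :
  #|S| = r -> is_clique (turan_rel (r + 2) r) S ->
  #|S'| = r -> is_clique (turan_rel (r + 2) r) S' ->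
  Ftur S = Ftur S' -> S \subset S'.
Proof.
move=> cS hS cS' hS' [h0 h1].
have r0 : 0 < r by move: hr; clear; lia.
have r2 : 2 <= r by move: hr; clear; lia.
apply/subsetP => i iS.
have [j jS' hj] := tur_res_ex r0 cS' hS' (phi r0 i).
rewrite /= in hj.
case: (eqVneq i j) => [-> //|nij].
have hi := ltn_ord i; have hjl := ltn_ord j.
rewrite (modr r2 hi) (modr r2 hjl) in hj.
have nij' : (i : nat) != j by [].
have key : ((i < 2) && (j == i + r :> nat)) || ((j < 2) && (i == j + r :> nat)).
  move: hj nij' hi hjl r2; clear.
  case: (ltnP i r) => a; case: (ltnP j r) => b; move=> hj nij hi hjl r2.
  - by rewrite hj eqxx in nij.
  - apply/orP; left; apply/andP; split; apply/eqP || idtac; lia.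
  - apply/orP; right; apply/andP; split; apply/eqP || idtac; lia.
  - apply/orP; left; apply/andP; split; apply/eqP || idtac; lia.
case/orP: key => /andP[ilt /eqP hji].
-
  have hiS' : i \in S'.
    have : (i : nat) = 0 \/ (i : nat) = 1 by move: ilt; clear; lia.
    case=> hv.
    + have -> : i = o0 r by apply: val_inj.
      by rewrite -h0; have <- : i = o0 r by apply: val_inj.
    + have -> : i = o1 r by apply: val_inj.
      by rewrite -h1; have <- : i = o1 r by apply: val_inj.
  exfalso; move/eqP: nij; apply.
  apply: (tur_res_inj hS' hiS' jS'); rewrite hji modnDr //.
- have hjS : j \in S.
    have : (j : nat) = 0 \/ (j : nat) = 1 by move: ilt; clear; lia.
    case=> hv.
    + have -> : j = o0 r by apply: val_inj.
      by rewrite h0; have <- : j = o0 r by apply: val_inj.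
    + have -> : j = o1 r by apply: val_inj.
      by rewrite h1; have <- : j = o1 r by apply: val_inj.
  exfalso; move/eqP: nij; apply.
  apply: (tur_res_inj hS iS hjS); rewrite hji modnDr //.
Qed.

Definition gv (r : nat) (b0 b1 : bool) (m : nat) : nat :=
  if (m == 0) && ~~ b0 then r else if (m == 1) && ~~ b1 then r.+1 else m.

Lemma gv_lt r b0 b1 m : m < r -> gv r b0 b1 m < r + 2.
Proof.
rewrite /gv => h; case: ifP => _; first by clear; lia.
case: ifP => _; by move: h; clear; lia.
Qed.

Lemma gv_mod r b0 b1 m : 2 <= r -> m < r -> gv r b0 b1 m %% r = m.
Proof.
move=> r2 h; rewrite /gv.
case: (eqVneq m 0) => [->|n0] /=.
  by case: b0 => /=; rewrite ?mod0n ?modnn.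
case: (eqVneq m 1) => [->|n1] /=.
  case: b1 => /=; first by rewrite modn_small.
  have hl : r.+1 < r + 2 by rewrite addn2.
  by rewrite (modr r2 hl) ltnNge leqnSn /= subSnn.
by rewrite modn_small.
Qed.

Definition gtur r b0 b1 (m : 'I_r) : 'I_(r + 2) := Ordinal (gv_lt b0 b1 (ltn_ord m)).

Lemma tur_exists r (hr : 4 <= r) b0 b1 :
  exists S : {set 'I_(r + 2)},
    [/\ #|S| = r, is_clique (turan_rel (r + 2) r) S & Ftur S = (b0, b1)].
Proof.
have r2 : 2 <= r by move: hr; clear; lia.
have r0 : 0 < r by move: hr; clear; lia.
have r1 : 1 < r by move: hr; clear; lia.
have inj : injective (@gtur r b0 b1).
  move=> m m' hmm; have h := congr1 val hmm; rewrite /= in h; apply: ord_inj.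
  by rewrite -(gv_mod b0 b1 r2 (ltn_ord m)) h gv_mod.
exists (@gtur r b0 b1 @: setT); split.
- by rewrite card_imset // cardsT card_ord.
- apply/cliqueP => x y /imsetP [m _ ->] /imsetP [m' _ ->] nxy.
  rewrite /turan_rel /= !gv_mod //.
  by apply: contraNneq nxy => h; have -> : m = m' by apply: ord_inj.
- rewrite /Ftur; congr (_, _).
  + clear inj; case: b0.
    * apply/imsetP; exists (Ordinal r0) => //; apply: ord_inj => /=.
      by rewrite /gv.
    * apply/negbTE/negP => /imsetP [m _ /(congr1 val) /= hm].
      have hm0 : (m : nat) = 0.
        by rewrite -(gv_mod false b1 r2 (ltn_ord m)) -hm mod0n.
      move: hm; rewrite /gv hm0 /=; move: hr; clear; lia.
  + clear inj; case: b1.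
    * apply/imsetP; exists (Ordinal r1) => //; apply: ord_inj => /=.
      by rewrite /gv.
    * apply/negbTE/negP => /imsetP [m _ /(congr1 val) /= hm].
      have hm1 : (m : nat) = 1.
        by rewrite -(gv_mod b0 false r2 (ltn_ord m)) -hm modn_small.
      move: hm; rewrite /gv hm1 /=; case: b0 => /=; move: hr; clear; lia.
Qed.

Lemma kcount_tur r (hr : 4 <= r) : kcount (turan_rel (r + 2) r) r = 4.
Proof.
rewrite /kcount; set P := [set S : {set 'I_(r + 2)} | _].
have inj : {in P &, injective (@Ftur r)}.
  move=> S S'; rewrite !inE => /andP[/eqP cS hS] /andP[/eqP cS' hS'] hF.
  apply/eqP; rewrite eqEsubset (tur_sub hr cS hS cS' hS' hF).
  exact: (tur_sub hr cS' hS' cS hS (esym hF)).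
have im : (@Ftur r) @: P = setT.
  apply/eqP; rewrite eqEsubset subsetT /=; apply/subsetP => [[b0 b1]] _.
  have [S [cS hS hF]] := tur_exists hr b0 b1.
  by rewrite -hF; apply: imset_f; rewrite inE cS eqxx hS.
by rewrite -(card_in_imset inj) im cardsT card_prod card_bool.
Qed.

Lemma tur_class r (hr : 4 <= r) : in_class (turan_rel (r + 2) r) r.+1 r.
Proof.
have r0 : 0 < r by move: hr; clear; lia.
split; [split|split].
- by move=> i j; rewrite /turan_rel eq_sym.
- by move=> i; rewrite /turan_rel eqxx.
- move=> v; rewrite /degree.
  have sub : [set u | turan_rel (r + 2) r v u] \subset [set~ v].
    apply/subsetP => u; rewrite !inE; apply: contraNneq => ->.
    by rewrite /turan_rel eqxx.
  apply: leq_trans (subset_leq_card sub) _.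
  by rewrite cardsC1 card_ord addn2.
- move=> S hS; exact: (tur_clique_le r0 hS).
Qed.

Lemma rho_tur r (hr : 4 <= r) :
  rho (turan_rel (r + 2) r) r = (4%:R / (r + 2)%N%:R : rat)%R.
Proof. by rewrite /rho kcount_tur // card_ord. Qed.

Unset Implicit Arguments.

Theorem mainTheorem13 (r : nat) (hr : (4 <= r)%N) :
  is_f r r.+1 r (4%:R / (r + 2)%N%:R : rat)%R /\
  rho (turan_rel (r + 2) r) r = (4%:R / (r + 2)%N%:R : rat)%R.
Proof.
split; last exact: (rho_tur hr).
split.
  move=> V e [[hs hi] [hd hcl]] hV; apply: (upper _ hr) => //.
move=> y hy.
have h := hy _ (turan_rel (r + 2) r) (tur_class hr).
rewrite rho_tur // in h; apply: h.
by rewrite card_ord addn2.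
Qed.
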